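(* Let $n\ge1$ and $1\le k\le n$. With $F_k$, $\Omega$ and $\mathcal I$ as in the context, $\Omega F_k\equiv\big(4nk-2k(k-1)\big)F_k\pmod{\mathcal I}$.
   Context: Let $\mathbb C[\mathrm{Mat}_{2n}^{\mathbb R}]$ be the ring of complex polynomials in the real and imaginary parts of the entries of $Z=(z_{a,b})\in M_{2n}(\mathbb C)$, viewed as polynomials in $z_{a,b},\bar z_{a,b}$. For $1\le j,l\le 2n$, $\Phi_{jl}=\sum_{i=1}^n z_{j,i}\bar z_{l,i}$, and $F_k=\sum_{s}\mathrm{sgn}(s)\,\Phi_{1,s(1)+1}\Phi_{3,s(3)+1}\cdots\Phi_{2k-1,s(2k-1)+1}$, where $s$ runs over the permutations of $\{1,3,\dots,2k-1\}$. $\mathcal I$ is the kernel of restriction to $\mathrm U_{2n}$; $P_1\equiv P_2\pmod{\mathcal I}$ means they agree on $\mathrm U_{2n}$. For $1\le\alpha,\beta\le 2n$ let $E_{\alpha\beta}$ act by $\sum_{\gamma=1}^{2n}\big(z_{\gamma,\alpha}\frac{\partial}{\partial z_{\gamma,\beta}}-\bar z_{\gamma,\beta}\frac{\partial}{\partial\bar z_{\gamma,\alpha}}\big)$, $H_\gamma=E_{\gamma\gamma}$, and $\Omega=\sum_{\gamma}H_\gamma^2+\sum_{\alpha<\beta}(E_{\alpha\beta}E_{\beta\alpha}+E_{\beta\alpha}E_{\alpha\beta})$. *)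

(* Defs.v *)
From HB Require Import structures.
From mathcomp Require Import all_boot all_order all_algebra all_fingroup.
From mathcomp Require Import complex.
From mathcomp Require Import mpoly.
Set Implicit Arguments. Unset Strict Implicit. Unset Printing Implicit Defensive.
Import Order.TTheory GRing.Theory Num.Theory.
Local Open Scope ring_scope.

(* Complex numbers are modelled as R[i] = complex R for a real closed field R
   (e.g. the real numbers). Matrices have size m = 2n, indices are 0-based:
   paper index a corresponds to our index a-1. *)

Section Defs.
Variable R : rcfType.
Local Notation C := R[i].
Variable n : nat.

(* variable indices: (false,a,b) is z_{a,b}, (true,a,b) is zbar_{a,b} *)
Definition VarT := (bool * 'I_(n.*2) * 'I_(n.*2))%type.
Definition NV := #|{: VarT}|.
Definition Pol := {mpoly C[NV]}.

Definition zv (a b : 'I_(n.*2)) : Pol := 'X_(enum_rank ((false, a, b) : VarT)).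
Definition zbv (a b : 'I_(n.*2)) : Pol := 'X_(enum_rank ((true, a, b) : VarT)).
Definition dz (a b : 'I_(n.*2)) (P : Pol) : Pol := mderiv (enum_rank ((false, a, b) : VarT)) P.
Definition dzb (a b : 'I_(n.*2)) (P : Pol) : Pol := mderiv (enum_rank ((true, a, b) : VarT)) P.

Definition zn (c : bool) (a b : nat) : Pol :=
  match (insub a : option 'I_(n.*2)), (insub b : option 'I_(n.*2)) with
  | Some a', Some b' => 'X_(enum_rank ((c, a', b') : VarT))
  | _, _ => 0
  end.

Definition Phi (j l : nat) : Pol :=
  \sum_(i < n) zn false j i * zn true l i.

(* F_k = sum_{s perm of {1,3,..,2k-1}} sgn(s) prod_t Phi_{2t-1, s(2t-1)+1};
   writing s(2t-1) = 2 sigma(t) - 1 with sigma in S_k (an order-preserving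
   relabelling, so sgn s = sgn sigma), and passing to 0-based indices:
   Phi_{2t, 2 sigma(t) + 1} for t = 0..k-1. *)
Definition Fk (k : nat) : Pol :=
  \sum_(s : 'S_k) (-1) ^+ s * \prod_(t < k) Phi (2 * t) (2 * s t + 1).

Definition Eop (al be : 'I_(n.*2)) (P : Pol) : Pol :=
  \sum_(g < n.*2) (zv g al * dz g be P - zbv g be * dzb g al P).

Definition Hop (g : 'I_(n.*2)) (P : Pol) : Pol := Eop g g P.

Definition Omega (P : Pol) : Pol :=
  \sum_(g < n.*2) Hop g (Hop g P)
  + \sum_(al < n.*2) \sum_(be < n.*2 | (al < be)%N)
      (Eop al be (Eop be al P) + Eop be al (Eop al be P)).

Definition evZ (Z : 'M[C]_(n.*2)) (v : 'I_NV) : C :=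
  let: (c, a, b) := enum_val v in if c then (Z a b)^* else Z a b.

Definition unitary (Z : 'M[C]_(n.*2)) : Prop :=
  Z *m (map_mx Num.conj Z)^T = 1%:M.

(* P1 = P2 mod I, I = kernel of restriction to U_{2n} *)
Definition eqmodI (P1 P2 : Pol) : Prop :=
  forall Z : 'M[C]_(n.*2), unitary Z -> P1.@[evZ Z] = P2.@[evZ Z].

End Defs.

(* Main.v *)
Require Import Defs.
From HB Require Import structures.
From mathcomp Require Import all_boot all_order all_algebra all_fingroup.
From mathcomp Require Import complex.
From mathcomp Require Import mpoly.
From mathcomp Require Import ring zify.
Import GRing.Theory Num.Theory.
Local Open Scope ring_scope.
Section Deriv.
Variable R : rcfType.
Local Notation C := R[i].
Variable n : nat.
Local Notation Pol := (Pol R n).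
Local Notation m := (n.*2).

Lemma dX (M : nat) (i j : 'I_M) : mderiv i ('X_j : {mpoly C[M]}) = ((i == j)%:R : C) *: 1.
Proof.
rewrite mderivX mnm1E.
have [->|ne] := eqVneq i j.
  have -> : (U_(j) - U_(j))%MM = 0%MM by apply/mnmP => k; rewrite mnmBE subnn mnm0E.
  by rewrite mpolyX0 scale1r.
by rewrite !scale0r.
Qed.

Lemma EopD al be (p q : Pol) : Eop al be (p + q) = Eop al be p + Eop al be q.
Proof.
rewrite /Eop -big_split; apply: eq_bigr => g _.
rewrite /dz /dzb !raddfD /=; ring.
Qed.

Lemma EopZ al be c (p : Pol) : Eop al be (c *: p) = c *: Eop al be p.
Proof.
rewrite /Eop scaler_sumr; apply: eq_bigr => g _.
rewrite /dz /dzb !mderivZ scalerBr !scalerAr //.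
Qed.

Lemma EopN al be (p : Pol) : Eop al be (- p) = - Eop al be p.
Proof. by rewrite -scaleN1r EopZ scaleN1r. Qed.

Lemma EopB al be (p q : Pol) : Eop al be (p - q) = Eop al be p - Eop al be q.
Proof. by rewrite EopD EopN. Qed.

Lemma Eop0 al be : Eop al be (0 : Pol) = 0.
Proof. by rewrite /Eop big1 // => g _; rewrite /dz /dzb !raddf0 !mulr0 subrr. Qed.

Lemma Eop_sum al be (I : Type) (r : seq I) (P : pred I) (F : I -> Pol) :
  Eop al be (\sum_(i <- r | P i) F i) = \sum_(i <- r | P i) Eop al be (F i).
Proof.
elim: r => [|x r IH]; first by rewrite !big_nil Eop0.
by rewrite !big_cons; case: (P x); rewrite ?EopD IH.
Qed.

Lemma EopM al be (p q : Pol) :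
  Eop al be (p * q) = Eop al be p * q + p * Eop al be q.
Proof.
rewrite /Eop mulr_suml mulr_sumr -big_split; apply: eq_bigr => g _ /=.
rewrite /dz /dzb !mderivM; ring.
Qed.

Lemma Eop1 al be : Eop al be (1 : Pol) = 0.
Proof.
rewrite /Eop big1 // => g _.
by rewrite /dz /dzb -[1 : Pol]/(1%:MP) !mderivC !mulr0 subrr.
Qed.

End Deriv.
Section Vars.
Variable R : rcfType.
Local Notation C := R[i].
Variable n : nat.
Local Notation Pol := (Pol R n).
Local Notation m := (n.*2).
Local Notation zn := (zn R n).
Local Notation rk c a b := (enum_rank ((c, a, b) : VarT n)).

Lemma znE c (a b : 'I_m) : zn c a b = 'X_(rk c a b).
Proof. by rewrite /zn !valK. Qed.

Lemma zn_out c a b : ~~ ((a < m) && (b < m))%N -> zn c a b = 0.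
Proof.
move=> H; rewrite /zn; case: insubP => [a' ha ea|_] //; case: insubP => [b' hb eb|_] //.
by rewrite ha hb in H.
Qed.

Lemma sum_pick {M : nat} (a : 'I_M) (F : 'I_M -> Pol) :
  \sum_(g < M) (if g == a then F g else 0) = F a.
Proof. by rewrite -big_mkcond big_pred1_eq. Qed.

Lemma Eop_zv al be (a b : 'I_m) :
  Eop al be ('X_(rk false a b) : Pol) = ((b == be)%:R : C) *: 'X_(rk false a al).
Proof.
rewrite /Eop -(sum_pick a (fun g => ((b == be)%:R : C) *: 'X_(rk false g al))).
apply: eq_bigr => g _; rewrite /dz /dzb !dX !(inj_eq enum_rank_inj) !xpair_eqE /=.
rewrite scale0r mulr0 subr0 mulr_algr.
case: eqVneq => [->|_] /=; first by rewrite eq_sym.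
by rewrite scale0r.
Qed.

Lemma Eop_zbv al be (a b : 'I_m) :
  Eop al be ('X_(rk true a b) : Pol) = - (((b == al)%:R : C) *: 'X_(rk true a be)).
Proof.
rewrite /Eop -(sum_pick a (fun g => - (((b == al)%:R : C) *: 'X_(rk true g be)))).
apply: eq_bigr => g _; rewrite /dz /dzb !dX !(inj_eq enum_rank_inj) !xpair_eqE /=.
rewrite scale0r mulr0 sub0r mulr_algr.
case: eqVneq => [->|_] /=; first by rewrite eq_sym.
by rewrite scale0r oppr0.
Qed.

Lemma Eop_znf al be (a b : nat) :
  Eop al be (zn false a b) = ((b == be :> nat)%:R : C) *: zn false a al.
Proof.
case: (boolP ((a < m) && (b < m))%N) => [/andP[ha hb]|H].
  rewrite -[a]/(val (Ordinal ha)) -[b]/(val (Ordinal hb)) !znE Eop_zv.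
  by rewrite val_eqE.
rewrite zn_out // /Eop big1 ?scale0r; last first.
  by move=> g _; rewrite /dz /dzb !raddf0 !mulr0 subrr.
case: (ltnP a m) => ha; last by rewrite zn_out ?scaler0 // ltnNge ha.
move: H; rewrite ha /= -leqNgt => hb.
have -> : (b == be :> nat) = false.
  by apply/negbTE; apply/eqP => e; move: (ltn_ord be); rewrite -e ltnNge hb.
by rewrite scale0r.
Qed.

Lemma Eop_znt al be (a b : nat) :
  Eop al be (zn true a b) = - (((b == al :> nat)%:R : C) *: zn true a be).
Proof.
case: (boolP ((a < m) && (b < m))%N) => [/andP[ha hb]|H].
  rewrite -[a]/(val (Ordinal ha)) -[b]/(val (Ordinal hb)) !znE Eop_zbv.
  by rewrite val_eqE.
rewrite zn_out // /Eop big1 ?scale0r; last first.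
  by move=> g _; rewrite /dz /dzb !raddf0 !mulr0 subrr.
case: (ltnP a m) => ha; last by rewrite zn_out ?scaler0 ?oppr0 // ltnNge ha.
move: H; rewrite ha /= -leqNgt => hb.
have -> : (b == al :> nat) = false.
  by apply/negbTE; apply/eqP => e; move: (ltn_ord al); rewrite -e ltnNge hb.
by rewrite scale0r oppr0.
Qed.

End Vars.
Section PhiDeriv.
Variable R : rcfType.
Local Notation C := R[i].
Variable n : nat.
Local Notation Pol := (Pol R n).
Local Notation m := (n.*2).
Local Notation zn := (zn R n).

Lemma sum_delta_nat (F : nat -> Pol) (c : nat) :
  \sum_(i < n) ((i == c :> nat)%:R : C) *: F i = ((c < n)%:R : C) *: F c.
Proof.
case: (ltnP c n) => hc.
  rewrite (bigD1 (Ordinal hc)) //= eqxx scale1r big1 ?addr0 // => i.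
  by rewrite -val_eqE /= => /negbTE ->; rewrite scale0r.
rewrite scale0r big1 // => i _.
rewrite (_ : (i == c :> nat) = false) ?scale0r //.
by apply/negbTE; apply/eqP => e; move: (ltn_ord i); rewrite e ltnNge hc.
Qed.

Lemma EPhi al be (j l : nat) :
  Eop al be (Phi R n j l) =
  (((be < n)%N%:R - (al < n)%N%:R : C)) *: (zn false j al * zn true l be).
Proof.
rewrite /Phi Eop_sum.
under eq_bigr => i _ do rewrite EopM Eop_znf Eop_znt -scalerAl mulrN -scalerAr.
rewrite sumrB (sum_delta_nat (fun i => zn false j al * zn true l i)).
rewrite (sum_delta_nat (fun i => zn false j i * zn true l be)) /=.
by rewrite scalerBl.
Qed.

Lemma E2 al be (j l : nat) :
  Eop al be (zn false j be * zn true l al) =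
  zn false j al * zn true l al - zn false j be * zn true l be.
Proof.
by rewrite EopM Eop_znf Eop_znt !eqxx !scale1r mulrN.
Qed.

Lemma EEPhi al be (j l : nat) :
  Eop al be (Eop be al (Phi R n j l)) =
  (((al < n)%N%:R - (be < n)%N%:R : C)) *:
     (zn false j al * zn true l al - zn false j be * zn true l be).
Proof. by rewrite EPhi EopZ E2. Qed.

End PhiDeriv.
Section NumLem.
Variable K : comRingType.
Variable n : nat.
Local Notation m := (n.*2).
Definition ind (g : 'I_m) : K := (g < n)%N%:R.

Lemma sum_ind : \sum_(g < m) ind g = n%:R.
Proof.
transitivity (\sum_(g < m | (g < n)%N) (1:K)).
  by rewrite [RHS]big_mkcond; apply: eq_bigr => g _; rewrite /ind; case: ifP.
rewrite -(big_ord_widen _ (fun _ => (1:K))); last by rewrite -addnn leq_addr.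
by rewrite sumr_const card_ord.
Qed.

Lemma sum_one : \sum_(g < m) (1:K) = m%:R.
Proof. by rewrite sumr_const card_ord. Qed.

Lemma sum2B (F G : 'I_m -> 'I_m -> K) :
  \sum_a \sum_b (F a b - G a b) = \sum_a \sum_b F a b - \sum_a \sum_b G a b.
Proof. by rewrite -sumrB; apply: eq_bigr => a _; rewrite sumrB. Qed.

Lemma sum2D (F G : 'I_m -> 'I_m -> K) :
  \sum_a \sum_b (F a b + G a b) = \sum_a \sum_b F a b + \sum_a \sum_b G a b.
Proof. by rewrite -big_split; apply: eq_bigr => a _; rewrite big_split. Qed.

Lemma sum2_prod (F G : 'I_m -> K) :
  \sum_a \sum_b (F a * G b) = (\sum_a F a) * (\sum_b G b).
Proof. by rewrite big_distrlr. Qed.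

Lemma ind2 g : ind g * ind g = ind g.
Proof. by rewrite /ind; case: (g < n)%N; rewrite ?mulr1 ?mulr0. Qed.

Lemma L1 (u : 'I_m -> K) :
  \sum_a \sum_b ((ind a - ind b) * (u a - u b)) =
  2 * (m%:R * \sum_g (ind g * u g) - n%:R * \sum_g u g).
Proof.
have H a b : (ind a - ind b) * (u a - u b) =
  ((ind a * u a) * 1 + 1 * (ind b * u b)) - (ind a * u b + u a * ind b) by ring.
rewrite (eq_bigr (fun a => \sum_b (((ind a * u a) * 1 + 1 * (ind b * u b)) - (ind a * u b + u a * ind b)))); last first.
  by move=> a _; apply: eq_bigr => b _; exact: H.
rewrite sum2B !sum2D !sum2_prod sum_one sum_ind; ring.
Qed.

Lemma L2 (u v : 'I_m -> K) :
  \sum_a \sum_b ((ind b - ind a) * (ind a - ind b) * (u a * v b)) =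
  2 * (\sum_g (ind g * u g)) * (\sum_g (ind g * v g))
  - (\sum_g u g) * (\sum_g (ind g * v g)) - (\sum_g (ind g * u g)) * (\sum_g v g).
Proof.
have H a b : (ind b - ind a) * (ind a - ind b) * (u a * v b) =
  ((2 * (ind a * u a)) * (ind b * v b) - u a * (ind b * v b)) - (ind a * u a) * v b.
  have -> : (ind b - ind a) * (ind a - ind b) = 2 * ind a * ind b - ind a * ind a - ind b * ind b by ring.
  rewrite !ind2; ring.
rewrite (eq_bigr (fun a => \sum_b (((2 * (ind a * u a)) * (ind b * v b) - u a * (ind b * v b)) - (ind a * u a) * v b))); last first.
  by move=> a _; apply: eq_bigr => b _; exact: H.
rewrite !sum2B !sum2_prod -mulr_sumr; ring.
Qed.

End NumLem.
Section Generic.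
Variable V : comRingType.

Lemma sym_split (M : nat) (T : 'I_M -> 'I_M -> V) :
  \sum_(a : 'I_M) \sum_(b : 'I_M) T a b =
  \sum_(g : 'I_M) T g g + \sum_(a : 'I_M) \sum_(b : 'I_M | (a < b)%N) (T a b + T b a).
Proof.
have E1 (a : 'I_M) : \sum_(b : 'I_M) T a b =
   T a a + \sum_(b : 'I_M | (a < b)%N) T a b + \sum_(b : 'I_M | (b < a)%N) T a b.
  rewrite (bigD1 a) //= (bigID (fun b : 'I_M => (a < b)%N)) /= addrA; congr (_ + _ + _).
    by apply: eq_bigl => b; rewrite -val_eqE /=; case: ltngtP.
  by apply: eq_bigl => b; rewrite -val_eqE /=; case: ltngtP.
rewrite (eq_bigr _ (fun a _ => E1 a)) !big_split /= -addrA; congr (_ + _).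
have -> : \sum_(a : 'I_M) \sum_(b : 'I_M | (a < b)%N) (T a b + T b a) =
  \sum_(a : 'I_M) \sum_(b : 'I_M | (a < b)%N) T a b + \sum_(a : 'I_M) \sum_(b : 'I_M | (a < b)%N) T b a.
  by rewrite -big_split; apply: eq_bigr => a _; rewrite big_split.
congr (_ + _).
rewrite (eq_bigr (fun a : 'I_M => \sum_(b : 'I_M) (if (b < a)%N then T a b else 0))); last first.
  by move=> a _; rewrite big_mkcond.
by rewrite exchange_big; apply: eq_bigr => a _; rewrite [RHS]big_mkcond.
Qed.

Lemma der_prod (D : V -> V) (HD : forall p q, D (p * q) = D p * q + p * D q)
  (HD1 : D 1 = 0) (I : eqType) (r : seq I) (f : I -> V) : uniq r ->
  D (\prod_(u <- r) f u) =
  \sum_(t <- r) \prod_(u <- r) (if u == t then D (f u) else f u).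
Proof.
elim: r => [|x r IH] /=; first by rewrite !big_nil HD1.
move=> /andP[xr ur].
rewrite big_cons HD IH // big_cons big_cons eqxx.
congr (_ * _ + _).
  apply: eq_big_seq => u ur'.
  have -> : (u == x) = false by apply/negbTE; apply: contraNneq xr => <-.
  by [].
rewrite mulr_sumr; apply: eq_big_seq => t tr.
rewrite big_cons.
have -> : (x == t) = false by apply/negbTE; apply: contraNneq xr => ->.
by [].
Qed.

Lemma ex22 (I J : finType) (F : I -> I -> J -> J -> V) :
  \sum_a \sum_b \sum_c \sum_d F a b c d = \sum_c \sum_d \sum_a \sum_b F a b c d.
Proof.
transitivity (\sum_a \sum_c \sum_b \sum_d F a b c d).
  by apply: eq_bigr => a _; rewrite exchange_big.
rewrite exchange_big; apply: eq_bigr => c _.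
transitivity (\sum_a \sum_d \sum_b F a b c d).
  by apply: eq_bigr => a _; rewrite exchange_big.
by rewrite exchange_big.
Qed.

Lemma ex21 (I J : finType) (F : I -> I -> J -> V) :
  \sum_a \sum_b \sum_c F a b c = \sum_c \sum_a \sum_b F a b c.
Proof.
transitivity (\sum_a \sum_c \sum_b F a b c).
  by apply: eq_bigr => a _; rewrite exchange_big.
by rewrite exchange_big.
Qed.

Lemma prod2 (I : finType) (F : I -> V) s t : s != t ->
  \prod_u F u = F s * (F t * \prod_(u | (u != s) && (u != t)) F u).
Proof.
move=> st; rewrite (bigD1 s) //= (bigD1 t) //=; last by rewrite eq_sym.
Qed.

End Generic.

Lemma OmegaE (R : rcfType) (n : nat) (P : Pol R n) :
  Omega P = \sum_al \sum_be Eop al be (Eop be al P).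
Proof. by rewrite sym_split /Omega /Hop. Qed.
Section Eval.
Variable R : rcfType.
Local Notation C := R[i].
Variable n : nat.
Local Notation Pol := (Pol R n).
Local Notation m := (n.*2).
Local Notation zn := (zn R n).
Variable Z : 'M[C]_m.
Hypothesis HZ : unitary Z.
Local Notation ev p := (meval (evZ Z) p).

Lemma ev_znE c (a b : 'I_m) : ev (zn c a b) = if c then (Z a b)^* else Z a b.
Proof. by rewrite znE mevalXU /evZ enum_rankK. Qed.

Lemma unit_sum (j l : nat) : (j < m)%N -> (l < m)%N ->
  \sum_(g < m) ev (zn false j g) * ev (zn true l g) = ((j == l)%:R : C).
Proof.
move=> hj hl.
have := congr1 (fun M : 'M[C]_m => M (Ordinal hj) (Ordinal hl)) HZ.
rewrite !mxE /= => <-.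
apply: eq_bigr => g _.
by rewrite -[j]/(val (Ordinal hj)) -[l]/(val (Ordinal hl)) !ev_znE !mxE.
Qed.

Lemma ev_Phi (j l : nat) :
  ev (Phi R n j l) = \sum_(g < m) ind C n g * (ev (zn false j g) * ev (zn true l g)).
Proof.
rewrite /Phi rmorph_sum /=.
under eq_bigr => i _ do rewrite rmorphM /=.
rewrite (big_ord_widen m (fun i => ev (zn false j i) * ev (zn true l i))); last first.
  by rewrite -addnn leq_addr.
rewrite big_mkcond; apply: eq_bigr => g _; rewrite /ind.
by case: ifP => _; rewrite ?mul1r ?mul0r.
Qed.

Lemma N1 (j l : nat) : (j < m)%N -> (l < m)%N -> j != l ->
  \sum_al \sum_be ev (Eop al be (Eop be al (Phi R n j l))) =
  2 * (m%:R * ev (Phi R n j l)).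
Proof.
move=> hj hl jl.
rewrite (eq_bigr (fun al => \sum_be ((ind C n al - ind C n be) *
   ((fun g => ev (zn false j g) * ev (zn true l g)) al -
    (fun g => ev (zn false j g) * ev (zn true l g)) be)))); last first.
  move=> al _; apply: eq_bigr => be _.
  by rewrite EEPhi mevalZ rmorphB /= !rmorphM.
rewrite L1 unit_sum // (negbTE jl) mulr0 subr0 ev_Phi.
by [].
Qed.

Lemma N2 (j l j' l' : nat) : (j < m)%N -> (l < m)%N -> (j' < m)%N -> (l' < m)%N ->
  j != l' -> j' != l ->
  \sum_al \sum_be (ev (Eop al be (Phi R n j l)) * ev (Eop be al (Phi R n j' l'))) =
  2 * ev (Phi R n j l') * ev (Phi R n j' l).
Proof.
move=> hj hl hj' hl' jl' j'l.
rewrite (eq_bigr (fun al => \sum_be ((ind C n be - ind C n al) * (ind C n al - ind C n be) *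
   ((fun g => ev (zn false j g) * ev (zn true l' g)) al *
    (fun g => ev (zn false j' g) * ev (zn true l g)) be)))); last first.
  move=> al _; apply: eq_bigr => be _.
  rewrite !EPhi !mevalZ !rmorphM /= /ind; ring.
rewrite L2 !unit_sum // (negbTE jl') (negbTE j'l) !mul0r !mulr0 !subr0 !ev_Phi.
by [].
Qed.

End Eval.
Section Final.
Variable K : comRingType.
Variable k : nat.

Lemma final_comb (c1 : K) (a : 'I_k -> 'I_k -> K) :
  \sum_(σ : 'S_k) (-1) ^+ σ * (\sum_(t : 'I_k) \sum_(s : 'I_k)
     (if s == t then c1 * \prod_u a u (σ u) else 2 * \prod_u a u ((tperm s t * σ)%g u))) =
  (k%:R * (c1 - 2 * (k%:R - 1))) * \sum_(σ : 'S_k) (-1) ^+ σ * \prod_u a u (σ u).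
Proof.
set D := \sum_(σ : 'S_k) (-1) ^+ σ * \prod_u a u (σ u).
have swap (s t : 'I_k) : s != t ->
    \sum_(σ : 'S_k) (-1) ^+ σ * \prod_u a u ((tperm s t * σ)%g u) = - D.
  move=> st; rewrite /D (reindex_inj (mulgI (tperm s t))) /= -sumrN.
  apply: eq_bigr => σ _; rewrite tpermKg odd_permM odd_tperm st signr_addb expr1 mulN1r mulNr.
  by [].
have DE : D = \sum_(σ : 'S_k) (-1) ^+ σ * \prod_u a u (σ u) by [].
clearbody D.
rewrite (eq_bigr (fun σ : 'S_k => \sum_(t : 'I_k) \sum_(s : 'I_k) (-1) ^+ σ *
     (if s == t then c1 * \prod_u a u (σ u) else 2 * \prod_u a u ((tperm s t * σ)%g u))));
  last first.
  by move=> σ _; rewrite mulr_sumr; apply: eq_bigr => t _; rewrite mulr_sumr.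
rewrite exchange_big /=.
rewrite (eq_bigr (fun t : 'I_k => c1 * D - 2 * D * (k%:R - 1))); last first.
  move=> t _; rewrite exchange_big /= (bigD1 t) //= eqxx.
  have -> : \sum_(σ : 'S_k) (-1) ^+ σ * (c1 * \prod_u a u (σ u)) = c1 * D.
    by rewrite DE mulr_sumr; apply: eq_bigr => σ _; rewrite mulrCA.
  rewrite (eq_bigr (fun _ => - (2 * D))); last first.
    move=> s st.
    transitivity (2 * \sum_(σ : 'S_k) (-1) ^+ σ * \prod_u a u ((tperm s t * σ)%g u));
      last by rewrite swap // mulrN.
    by rewrite mulr_sumr; apply: eq_bigr => σ _; rewrite (negbTE st) mulrCA.
  have Hs : \sum_(i < k) - (2 * D) = - (2 * D) + \sum_(i < k | i != t) - (2 * D).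
    by rewrite (bigD1 t).
  rewrite sumr_const card_ord in Hs.
  have -> : \sum_(i < k | i != t) - (2 * D) = (- (2 * D)) *+ k - - (2 * D).
    by rewrite Hs; ring.
  rewrite -mulr_natr; ring.
rewrite sumr_const card_ord -mulr_natr; ring.
Qed.

End Final.
Section Main.
Variable R : rcfType.
Local Notation C := R[i].
Variable n k : nat.
Hypothesis hkn : (k <= n)%N.
Hypothesis hk1 : (1 <= k)%N.
Local Notation Pol := (Pol R n).
Local Notation m := (n.*2).
Variable Z : 'M[C]_m.
Hypothesis HZ : unitary Z.
Local Notation ev p := (meval (evZ Z) p).

Let f (σ : 'S_k) (u : 'I_k) : Pol := Phi R n (2 * u) (2 * σ u + 1).
Let a (u v : 'I_k) : C := ev (Phi R n (2 * u) (2 * v + 1)).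

Let bnd1 (u : 'I_k) : (2 * u < m)%N.
Proof. have := ltn_ord u; lia. Qed.
Let bnd2 (u : 'I_k) : (2 * u + 1 < m)%N.
Proof. have := ltn_ord u; lia. Qed.
Let par (u v : 'I_k) : (2 * u)%N != (2 * v + 1)%N.
Proof. apply/eqP; lia. Qed.

Lemma DD al be (σ : 'S_k) :
  Eop al be (Eop be al (\prod_u f σ u)) =
  \sum_(t : 'I_k) \sum_(s : 'I_k) \prod_u
    (if u == s then Eop al be (if u == t then Eop be al (f σ u) else f σ u)
     else (if u == t then Eop be al (f σ u) else f σ u)).
Proof.
rewrite (@der_prod _ (Eop be al) (@EopM _ _ be al) (@Eop1 _ _ be al)) ?index_enum_uniq //.
rewrite Eop_sum; apply: eq_bigr => t _.
by rewrite (@der_prod _ (Eop al be) (@EopM _ _ al be) (@Eop1 _ _ al be)) ?index_enum_uniq.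
Qed.

Lemma Ksig (σ : 'S_k) :
  \sum_al \sum_be ev (Eop al be (Eop be al (\prod_u f σ u))) =
  \sum_(t : 'I_k) \sum_(s : 'I_k) (if s == t then (2 * m%:R) * \prod_u a u (σ u)
     else 2 * \prod_u a u ((tperm s t * σ)%g u)).
Proof.
rewrite (eq_bigr (fun al => \sum_be \sum_(t : 'I_k) \sum_(s : 'I_k) \prod_u ev
    (if u == s then Eop al be (if u == t then Eop be al (f σ u) else f σ u)
     else (if u == t then Eop be al (f σ u) else f σ u)))); last first.
  move=> al _; apply: eq_bigr => be _.
  rewrite DD rmorph_sum; apply: eq_bigr => t _.
  rewrite rmorph_sum; apply: eq_bigr => s _.
  by rewrite rmorph_prod.
rewrite ex22; apply: eq_bigr => t _; apply: eq_bigr => s _.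
case: eqVneq => [->|st].
  transitivity (\sum_al \sum_be ev (Eop al be (Eop be al (f σ t))) * \prod_(u | u != t) a u (σ u)).
    apply: eq_bigr => al _; apply: eq_bigr => be _.
    rewrite (bigD1 t) //= eqxx; congr (_ * _).
    by apply: eq_bigr => u /negbTE ->.
  rewrite -(eq_bigr _ (fun al _ => mulr_suml _ _ _ _)) -mulr_suml.
  rewrite N1 //; try exact: par.
  rewrite [in RHS](bigD1 t) //=; ring.
transitivity (\sum_al \sum_be (ev (Eop al be (f σ s)) * ev (Eop be al (f σ t)))
   * \prod_(u | (u != s) && (u != t)) a u (σ u)).
  apply: eq_bigr => al _; apply: eq_bigr => be _.
  rewrite (prod2 _ _ _ _ _ st) eqxx (negbTE st) eq_sym (negbTE st) eqxx mulrA; congr (_ * _).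
  by apply: eq_bigr => u /andP[/negbTE -> /negbTE ->].
rewrite -(eq_bigr _ (fun al _ => mulr_suml _ _ _ _)) -mulr_suml.
rewrite N2 //; try exact: par.
rewrite (prod2 _ _ _ _ _ st) !permM tpermL tpermR.
rewrite [in RHS](eq_bigr (fun u => a u (σ u))); last first.
  move=> u /andP[us ut]; rewrite permM tpermD // eq_sym //.
rewrite /a /f; ring.
Qed.

Lemma Eop_sign al be (b : bool) (p : Pol) :
  Eop al be ((-1) ^+ b * p) = (-1) ^+ b * Eop al be p.
Proof. by rewrite !mulr_sign; case: b; rewrite ?EopN. Qed.

Lemma main_ev :
  ev (Omega (Fk R n k)) = ((4 * n * k)%:R - (2 * k * (k - 1))%:R) * ev (Fk R n k).
Proof.
rewrite OmegaE rmorph_sum.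
transitivity (\sum_al \sum_be \sum_(σ : 'S_k)
    (-1) ^+ σ * ev (Eop al be (Eop be al (\prod_u f σ u)))).
  apply: eq_bigr => al _; rewrite rmorph_sum; apply: eq_bigr => be _.
  rewrite /Fk [Eop be al _]Eop_sum Eop_sum rmorph_sum; apply: eq_bigr => σ _.
  by rewrite !Eop_sign rmorphM rmorph_sign.
rewrite ex21.
rewrite (eq_bigr (fun σ : 'S_k => (-1) ^+ σ * \sum_(t : 'I_k) \sum_(s : 'I_k)
     (if s == t then (2 * m%:R) * \prod_u a u (σ u)
      else 2 * \prod_u a u ((tperm s t * σ)%g u)))); last first.
  move=> σ _; rewrite -Ksig mulr_sumr; apply: eq_bigr => al _.
  by rewrite mulr_sumr.
rewrite final_comb.
have -> : ev (Fk R n k) = \sum_(σ : 'S_k) (-1) ^+ σ * \prod_u a u (σ u).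
  rewrite /Fk rmorph_sum; apply: eq_bigr => σ _.
  by rewrite rmorphM rmorph_sign rmorph_prod.
congr (_ * _).
rewrite -mul2n !natrM natrB //; ring.
Qed.

End Main.

Theorem theorem3p7 (R : rcfType) (n k : nat) :
  (1 <= n)%N -> (1 <= k <= n)%N ->
  eqmodI (Omega (Fk R n k))
         (((4 * n * k)%:R - (2 * k * (k - 1))%:R) *: Fk R n k).
Proof.
move=> hn /andP[hk1 hkn] Z HZ.
by rewrite mevalZ main_ev.
Qed.
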